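(* Let $\mathcal W\in{\rm Gr}^{(0)}_+$ with wave function $\Psi$ and canonical operator $\mathtt Q_{\mathcal W}$. If $\mathtt B=\sum_{k\ge0}\mathtt B_k\partial_z^k\in\mathcal D$ satisfies $\mathtt B_0=\Psi$ and $\mathtt Q_{\mathcal W}\,\mathtt B=\mathtt B\,z$, then $\mathtt B=\mathtt G_{\mathcal W}$.
   Context: $H_+=\mathbb C[z]$, $H_-=z^{-1}\mathbb C[[z^{-1}]]$, $H=H_+\oplus H_-$. ${\rm Gr}^{(0)}_+$ is the set of closed subspaces $\mathcal W\subset H$ with $\pi_+:\mathcal W\to H_+$ (projection along $H_-$) an isomorphism. $\mathcal D=\mathbb C((z^{-1}))[[\partial_z]]$ is the ring of differential operators $\sum_{m\ge0}a_m(z)\partial_z^m$, $a_m\in H$, acting on $H$; $\mathcal D_\pm=H_\pm[[\partial_z]]$. $\mathtt G_{\mathcal W}$ is the unique operator with $\mathtt G_{\mathcal W}-1\in\mathcal D_-$ and $\mathcal W=\mathtt G_{\mathcal W}\cdot H_+$ (Sato's theorem); $\mathtt Q_{\mathcal W}:=\mathtt G_{\mathcal W}z\mathtt G_{\mathcal W}^{-1}$. The wave function $\Psi$ is the unique element of $\mathcal W\cap(1+H_-)$. *)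

(* Defs.v *)
From HB Require Import structures.
From mathcomp Require Import all_boot all_order all_algebra.
From mathcomp Require Import reals complex.
From Stdlib Require Import ClassicalEpsilon.
Set Implicit Arguments. Unset Strict Implicit. Unset Printing Implicit Defensive.
Import Order.TTheory GRing.Theory Num.Theory.
Local Open Scope ring_scope.

Section SatoDefs.
Variable C : fieldType.

(** Formal Laurent series: f n is the coefficient of z^n (n : int). *)
Definition lser := int -> C.

(** H = H_+ (+) H_- = C[z] (+) z^{-1}C[[z^{-1}]] : support bounded above. *)
Definition inH (f : lser) : Prop := exists N : int, forall n : int, N < n -> f n = 0.
Definition inHplus (f : lser) : Prop := inH f /\ (forall n : int, n < 0 -> f n = 0).
Definition inHminus (f : lser) : Prop := forall n : int, 0 <= n -> f n = 0.

Definition proj_plus (f : lser) : lser := fun n => if 0 <= n then f n else 0.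

(** Sum of a finitely supported family indexed by nat (junk 0 otherwise). *)
Definition fsumN (u : nat -> C) : C :=
  match excluded_middle_informative
          (exists K : nat, forall m : nat, (K <= m)%N -> u m = 0) with
  | left h => \sum_(m < proj1_sig (constructive_indefinite_description _ h)) u m
  | right _ => 0
  end.

(** Sum of a finitely supported family indexed by int (junk 0 otherwise). *)
Definition fsumZ (u : int -> C) : C :=
  match excluded_middle_informative
          (exists K : nat, forall i : int, (K < absz i)%N -> u i = 0) with
  | left h =>
      let K := proj1_sig (constructive_indefinite_description _ h) in
      \sum_(i < (K.*2).+1) u (i%:Z - K%:Z)
  | right _ => 0
  end.

Definition lmul (f g : lser) : lser := fun n => fsumZ (fun i => f i * g (n - i)).
Definition lderiv (f : lser) : lser := fun n => (n + 1)%:~R * f (n + 1).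
Definition lderivn (k : nat) (f : lser) : lser := iter k lderiv f.
Definition lone : lser := fun n => if n == 0 then 1 else 0.
Definition lz : lser := fun n => if n == 1 then 1 else 0.

(** Differential operators sum_m A m * d_z^m *)
Definition op := nat -> lser.
(** membership in D = H[[d_z]] and in D_- = H_-[[d_z]] *)
Definition inD (A : op) : Prop := forall m, inH (A m).
Definition inDminus (A : op) : Prop := forall m, inHminus (A m).

Definition op1 : op := fun m => if m == 0%N then lone else (fun _ => 0).
Definition opz : op := fun m => if m == 0%N then lz else (fun _ => 0).
Definition opsub (A B : op) : op := fun m n => A m n - B m n.

(** Composition in D, via Leibniz' rule
    (a d^m)(b d^l) = sum_j 'C(m,j) a b^(j) d^(m+l-j):
    the coefficient of d^k is sum_(l <= k) sum_(i >= 0) 'C(k-l+i,i) A_(k-l+i) B_l^(i),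
    the inner (infinite) sum being taken coefficientwise. *)
Definition dcomp (A B : op) : op := fun k d =>
  \sum_(l < k.+1)
     fsumN (fun i => ('C(k - l + i, i))%:R *
                     lmul (A (k - l + i)%N) (lderivn i (B l)) d).

Definition act (A : op) (f : lser) : lser := fun d =>
  fsumN (fun m => lmul (A m) (lderivn m f) d).

Definition opinv (A : op) : op :=
  epsilon (inhabits op1) (fun X => inD X /\ dcomp A X = op1 /\ dcomp X A = op1).

Definition Qop (G : op) : op := dcomp (dcomp G opz) (opinv G).

(** Gr^(0)_+ : closed subspaces W of H such that pi_+ : W -> H_+ is an isomorphism.
    Closedness is with respect to the z^{-1}-adic topology of H. *)
Definition Gr0plus (W : lser -> Prop) : Prop :=
  (forall w, W w -> inH w) /\
  [/\ W (fun _ => 0),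
      (forall (a : C) u v, W u -> W v -> W (fun n => a * u n + v n)),
      (forall f, inH f ->
          (forall N : nat, exists w, W w /\ forall n : int, - (N%:Z) < n -> f n = w n) ->
          W f),
      (forall w1 w2, W w1 -> W w2 -> proj_plus w1 = proj_plus w2 -> w1 = w2) &
      (forall p, inHplus p -> exists w, W w /\ proj_plus w = p)].

Definition is_sato_op (W : lser -> Prop) (G : op) : Prop :=
  inDminus (opsub G op1) /\
  (forall f, W f <-> exists p, inHplus p /\ act G p = f).

Definition is_wave_fn (W : lser -> Prop) (Psi : lser) : Prop :=
  W Psi /\ inHminus (fun n => Psi n - lone n).

End SatoDefs.

(* Main.v *)
Require Import Defs.
From HB Require Import structures.
From mathcomp Require Import all_boot all_order all_algebra.
From mathcomp Require Import reals complex.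
From mathcomp Require Import zify ring lra.
From Stdlib Require Import ClassicalEpsilon Classical.
Set Implicit Arguments. Unset Strict Implicit. Unset Printing Implicit Defensive.
Import Order.TTheory GRing.Theory Num.Theory.
Local Open Scope ring_scope.


Section Infra.
Variable C : numFieldType.

Lemma big_supp (T : eqType) (u : T -> C) (s t : seq T) :
  uniq s -> uniq t -> (forall x, u x != 0 -> x \in s) ->
  (forall x, u x != 0 -> x \in t) ->
  \sum_(x <- s) u x = \sum_(x <- t) u x.
Proof.
move=> us ut hs ht.
rewrite -(big_rmcond_in (fun x => u x != 0)); last by move=> x _ /negPn/eqP.
rewrite -[RHS](big_rmcond_in (fun x => u x != 0)); last by move=> x _ /negPn/eqP.
rewrite -big_filter -[RHS]big_filter; apply: perm_big.
apply: uniq_perm; rewrite ?filter_uniq // => x; rewrite !mem_filter.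
by case: (boolP (u x != 0)) => //= /[dup] /hs -> /ht ->.
Qed.

Lemma fsumN_supp (u : nat -> C) (s : seq nat) :
  uniq s -> (forall m, u m != 0 -> m \in s) -> fsumN u = \sum_(m <- s) u m.
Proof.
move=> us hs; rewrite /fsumN.
case: excluded_middle_informative => [h|h].
  case: (constructive_indefinite_description _ h) => K /= HK.
  rewrite -(big_mkord xpredT) /index_iota subn0; apply: big_supp; rewrite ?iota_uniq //.
  move=> m /[dup] um /hs _; rewrite mem_iota /= add0n.
  by case: ltnP => // /HK Hm; rewrite Hm eqxx in um.
exfalso; apply: h; exists (\max_(m <- s) m).+1 => m hm.
apply/eqP; apply: contraTT hm => /hs ms; rewrite -ltnNge ltnS.
by apply: (leq_bigmax_seq _ ms).
Qed.
End Infra.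
Section Infra2.
Variable C : numFieldType.

Lemma fsumZ_supp (u : int -> C) (s : seq int) :
  uniq s -> (forall x, u x != 0 -> x \in s) -> fsumZ u = \sum_(x <- s) u x.
Proof.
move=> us hs; rewrite /fsumZ.
case: excluded_middle_informative => [h|h].
  case: (constructive_indefinite_description _ h) => K /= HK.
  rewrite -(big_mkord xpredT (fun i : nat => u (i%:Z - K%:Z))) /index_iota subn0.
  rewrite -(big_map (fun i : nat => i%:Z - K%:Z) xpredT u).
  apply: big_supp => //.
    rewrite map_inj_uniq ?iota_uniq // => a b /eqP; rewrite subr_eq addrNK.
    by move/eqP => [].
  move=> x ux; have hx : (absz x <= K)%N.
    by rewrite leqNgt; apply/negP => /HK hx; rewrite hx eqxx in ux.
  apply/mapP; exists (absz (x + K%:Z)); last by lia.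
  by rewrite mem_iota add0n /=; lia.
exfalso; apply: h; exists (\max_(x <- s) absz x) => x hx.
apply/eqP; apply: contraTT hx => /hs ms; rewrite -leqNgt.
by apply: (leq_bigmax_seq _ ms).
Qed.
End Infra2.
Section GenSum.
Variable C : numFieldType.
Variable T : eqType.
Variable S : (T -> C) -> C.
Hypothesis HS : forall u s, uniq s -> (forall x, u x != 0 -> x \in s) ->
  S u = \sum_(x <- s) u x.

Definition fin (u : T -> C) := exists s : seq T, forall x, u x != 0 -> x \in s.

Lemma S_list u s : (forall x, u x != 0 -> x \in s) -> S u = \sum_(x <- undup s) u x.
Proof. by move=> h; apply: HS; rewrite ?undup_uniq // => x /h; rewrite mem_undup. Qed.

Lemma S0 u : (forall x, u x = 0) -> S u = 0.
Proof. by move=> h; rewrite (HS (s:=[::])) ?big_nil // => x; rewrite h eqxx. Qed.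

Lemma S_ext u v : (forall x, u x = v x) -> S u = S v.
Proof. by move=> h; have -> : u = v by apply: boolp.funext. Qed.

Lemma S_add u v : fin u -> fin v -> S (fun x => u x + v x) = S u + S v.
Proof.
move=> [su hu] [sv hv].
have hs : forall w, (forall x, w x != 0 -> x \in su ++ sv) -> S w = \sum_(x <- undup (su ++ sv)) w x.
  by move=> w; apply: S_list.
rewrite !hs ?big_split //.
- by move=> x /hv; rewrite mem_cat orbC => ->.
- by move=> x /hu; rewrite mem_cat => ->.
move=> x hx; rewrite mem_cat.
by case: (boolP (u x != 0)) => [/hu -> //|/negPn/eqP ux]; rewrite ux add0r in hx; rewrite (hv _ hx) orbT.
Qed.

Lemma S_scale c u : fin u -> S (fun x => c * u x) = c * S u.
Proof.
move=> [su hu]; rewrite (S_list (s:=su) (u := fun x => c * u x)); last first.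
  by move=> x; rewrite mulf_eq0 negb_or => /andP[_ /hu].
by rewrite (S_list (s:=su) hu) mulr_sumr.
Qed.

Lemma S_opp u : fin u -> S (fun x => - u x) = - S u.
Proof.
move=> hu; rewrite -mulN1r -(S_scale _ hu); apply: S_ext => x; by rewrite mulN1r.
Qed.

Lemma S_sub u v : fin u -> fin v -> S (fun x => u x - v x) = S u - S v.
Proof.
move=> hu [sv hv]; rewrite S_add // ?S_opp //; first by exists sv.
by exists sv => x; rewrite oppr_eq0; apply: hv.
Qed.

Lemma fin_add u v : fin u -> fin v -> fin (fun x => u x + v x).
Proof.
move=> [su hu] [sv hv]; exists (su ++ sv) => x hx; rewrite mem_cat.
by case: (boolP (u x != 0)) => [/hu -> //|/negPn/eqP ux]; rewrite ux add0r in hx; rewrite (hv _ hx) orbT.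
Qed.

Lemma fin_scale c u : fin u -> fin (fun x => c * u x).
Proof. by move=> [su hu]; exists su => x; rewrite mulf_eq0 negb_or => /andP[_ /hu]. Qed.

Lemma S_sum (J : Type) (r : seq J) (F : J -> T -> C) :
  (forall j, fin (F j)) -> S (fun x => \sum_(j <- r) F j x) = \sum_(j <- r) S (F j).
Proof.
move=> hF; elim: r => [|j r ih]; first by rewrite big_nil S0 // => x; rewrite big_nil.
rewrite big_cons -ih -S_add //; first by apply: S_ext => x; rewrite big_cons.
elim: r {ih} => [|k r [s hs]]; first by exists [::] => x; rewrite big_nil eqxx.
case: (hF k) => sk hk; exists (sk ++ s) => x; rewrite big_cons mem_cat => hx.
by case: (boolP (F k x != 0)) => [/hk -> //|/negPn/eqP ux]; rewrite ux add0r in hx; rewrite (hs _ hx) orbT.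
Qed.

Lemma S_single u a : (forall x, x != a -> u x = 0) -> S u = u a.
Proof.
move=> h; rewrite (HS (s := [:: a])) ?big_seq1 // => x; apply: contraR => xa.
by apply/eqP; apply: h; move: xa; rewrite inE.
Qed.

Lemma S_bij (f g : T -> T) u : cancel f g -> cancel g f -> fin u -> S (fun x => u (f x)) = S u.
Proof.
move=> fK gK [s hs]; rewrite (S_list (s := map g s)); last first.
  by move=> x /hs h; apply/mapP; exists (f x).
rewrite (S_list (s := s)) //.
have -> : undup (map g s) = map g (undup s).
  by rewrite undup_map_inj //; apply: (can_inj gK).
rewrite big_map; apply: eq_bigr => x _; by rewrite gK.
Qed.
End GenSum.

Section Fubini.
Variable C : numFieldType.
Variables T1 T2 : eqType.
Variable S1 : (T1 -> C) -> C.
Variable S2 : (T2 -> C) -> C.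
Hypothesis HS1 : forall u s, uniq s -> (forall x, u x != 0 -> x \in s) ->
  S1 u = \sum_(x <- s) u x.
Hypothesis HS2 : forall u s, uniq s -> (forall x, u x != 0 -> x \in s) ->
  S2 u = \sum_(x <- s) u x.

Lemma S_fubini (F : T1 -> T2 -> C) (s1 : seq T1) (s2 : seq T2) :
  (forall x y, F x y != 0 -> x \in s1 /\ y \in s2) ->
  S1 (fun x => S2 (F x)) = S2 (fun y => S1 (fun x => F x y)).
Proof.
move=> h.
have in1 : forall x y, F x y != 0 -> x \in s1 by move=> x y /h [].
have in2 : forall x y, F x y != 0 -> y \in s2 by move=> x y /h [].
rewrite (S_list HS1 (s := s1)); last first.
  move=> x; apply: contraR => xs; apply/eqP; apply: (S0 HS2) => y.
  by apply/eqP; apply: contraR xs => /in1.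
rewrite (S_list HS2 (s := s2)); last first.
  move=> y; apply: contraR => ys; apply/eqP; apply: (S0 HS1) => x.
  by apply/eqP; apply: contraR ys => /in2.
transitivity (\sum_(x <- undup s1) \sum_(y <- undup s2) F x y).
  by apply: eq_bigr => x _; apply: (S_list HS2) => y /in2.
rewrite exchange_big; apply: eq_bigr => y _; symmetry; apply: (S_list HS1) => x /in1.
by []. Qed.
End Fubini.


Section Basics.
Variable C : numFieldType.
Local Notation lser := (lser C).
Local Notation HZ := (@fsumZ_supp C).
Local Notation HN := (@fsumN_supp C).

Definition dle (f : lser) (N : int) := forall n, N < n -> f n = 0.

Lemma finZ_box (u : int -> C) (a b : int) :
  (forall x, u x != 0 -> a <= x <= b) -> fin u.
Proof.
move=> h; exists [seq a + i%:Z | i <- iota 0 (absz (b - a)).+1] => x /h /andP[h1 h2].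
apply/mapP; exists (absz (x - a)); last by lia.
by rewrite mem_iota add0n; lia.
Qed.

Lemma finN_box (u : nat -> C) (K : nat) :
  (forall m, u m != 0 -> (m < K)%N) -> fin u.
Proof. by move=> h; exists (iota 0 K) => m /h; rewrite mem_iota add0n. Qed.

Lemma fsumN_ord (u : nat -> C) (K : nat) :
  (forall m, u m != 0 -> (m < K)%N) -> fsumN u = \sum_(m < K) u m.
Proof.
move=> h; rewrite (HN (s := iota 0 K)) ?iota_uniq //; last first.
  by move=> m /h; rewrite mem_iota add0n.
by rewrite -(big_mkord xpredT) /index_iota subn0.
Qed.

Definition ffz (d : int) (m : nat) : C := \prod_(j < m) (d + j%:Z + 1)%:~R.

Lemma lderivnE m f d : lderivn m f d = ffz d m * f (d + m%:Z).
Proof.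
elim: m d => [|m ih] d; first by rewrite /ffz big_ord0 mul1r addr0.
rewrite /lderivn iterS -/(lderivn m f) /lderiv ih /ffz big_ord_recl mulrA.
congr (_ * _ * f _); last by lia.
  by rewrite /= addr0.
by apply: eq_bigr => j _; rewrite lift0; congr (_%:~R); lia.
Qed.

Lemma dle_lderivn m f N : dle f N -> dle (lderivn m f) (N - m%:Z).
Proof. by move=> h n hn; rewrite lderivnE h ?mulr0 //; lia. Qed.

Lemma dle_mono f N M : dle f N -> N <= M -> dle f M.
Proof. by move=> h hNM n hn; apply: h; lia. Qed.

Lemma lmul_fin f g Nf Ng n : dle f Nf -> dle g Ng -> fin (fun i => f i * g (n - i)).
Proof.
move=> hf hg; apply: (finZ_box (a := n - Ng) (b := Nf)) => x.
case: (ltrP Nf x) => [/hf -> |h1]; first by rewrite mul0r eqxx.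
case: (ltrP Ng (n - x)) => [/hg -> |h2]; first by rewrite mulr0 eqxx.
by move=> _; apply/andP; split=> //; lia.
Qed.

Lemma dle_lmul f g Nf Ng : dle f Nf -> dle g Ng -> dle (lmul f g) (Nf + Ng).
Proof.
move=> hf hg n hn; apply: (S0 HZ) => x.
case: (ltrP Nf x) => [/hf -> |h1]; first by rewrite mul0r.
by rewrite hg ?mulr0 //; lia.
Qed.

Lemma lmul_lonel f : lmul (lone C) f = f.
Proof.
apply: boolp.funext => n; rewrite /lmul (S_single HZ (a := 0)) /lone ?eqxx ?mul1r ?subr0 //.
by move=> x /negbTE ->; rewrite mul0r.
Qed.

Lemma lmul_loner f : lmul f (lone C) = f.
Proof.
apply: boolp.funext => n; rewrite /lmul (S_single HZ (a := n)) /lone ?subrr ?eqxx ?mulr1 //.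
by move=> x xn; rewrite subr_eq0 eq_sym (negbTE xn) mulr0.
Qed.

Lemma lmul_lzr f n : lmul f (lz C) n = f (n - 1).
Proof.
rewrite /lmul (S_single HZ (a := n - 1)) /lz.
  have -> : n - (n - 1) = 1 by lia.
  by rewrite eqxx mulr1.
move=> x xn; case: eqP => [h|]; last by rewrite mulr0.
move: xn; have -> : x = n - 1 by lia.
by rewrite eqxx.
Qed.

Lemma lmul0r g : lmul (fun _ => 0) g = (fun _ => 0 : C).
Proof. by apply: boolp.funext => n; apply: (S0 HZ) => x; rewrite mul0r. Qed.

Lemma lmulr0 g : lmul g (fun _ => 0) = (fun _ => 0 : C).
Proof. by apply: boolp.funext => n; apply: (S0 HZ) => x; rewrite mulr0. Qed.

Lemma lderivn0 m : lderivn m (fun _ => 0 : C) = (fun _ => 0).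
Proof. by apply: boolp.funext => n; rewrite lderivnE mulr0. Qed.

Lemma lderiv_lone : lderiv (lone C) = (fun _ => 0).
Proof.
apply: boolp.funext => n; rewrite /lderiv /lone.
case: (eqVneq (n + 1) 0) => [->|]; first by rewrite mul0r.
by rewrite mulr0.
Qed.
End Basics.


Section LmulAlg.
Variable C : numFieldType.
Local Notation lser := (lser C).
Local Notation HZ := (@fsumZ_supp C).
Local Notation HN := (@fsumN_supp C).

Definition zbox (a b : int) := [seq a + i%:Z | i <- iota 0 (absz (b - a)).+1].
Lemma mem_zbox a b x : a <= x <= b -> x \in zbox a b.
Proof.
move=> /andP[h1 h2]; apply/mapP; exists (absz (x - a)); last by lia.
by rewrite mem_iota add0n; lia.
Qed.

Lemma lmulC (f g : lser) Nf Ng : dle f Nf -> dle g Ng -> lmul f g = lmul g f.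
Proof.
move=> hf hg; apply: boolp.funext => n; rewrite /lmul.
rewrite -(S_bij HZ (f := fun x => n - x) (g := fun x => n - x)); last exact: lmul_fin hf hg.
- by apply: S_ext => x /=; rewrite mulrC; have -> : n - (n - x) = x by lia.
- by move=> x; lia.
- by move=> x; lia.
Qed.

Lemma lmulA (a b c : lser) Na Nb Nc : dle a Na -> dle b Nb -> dle c Nc ->
  lmul a (lmul b c) = lmul (lmul a b) c.
Proof.
move=> ha hb hc; apply: boolp.funext => d; rewrite /lmul.
transitivity (fsumZ (fun x => fsumZ (fun y => a x * (b y * c (d - x - y))))).
  apply: S_ext => x; rewrite -(S_scale HZ); last exact: lmul_fin hb hc.
  by [].
transitivity (fsumZ (fun z => fsumZ (fun x => a x * b (z - x) * c (d - z)))); last first.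
  apply: S_ext => z; rewrite mulrC -(S_scale HZ); last exact: lmul_fin ha hb.
  by apply: S_ext => x; rewrite mulrC.
rewrite [RHS](S_fubini HZ HZ (s1 := zbox (d - Nc) (Na + Nb)) (s2 := zbox (d - Nb - Nc) Na))
  ; last first.
  move=> z x; case: (ltrP Na x) => [/ha ->|h1]; first by rewrite !mul0r eqxx.
  case: (ltrP Nb (z - x)) => [/hb ->|h2]; first by rewrite mulr0 mul0r eqxx.
  case: (ltrP Nc (d - z)) => [/hc ->|h3]; first by rewrite mulr0 eqxx.
  by move=> _; split; apply: mem_zbox; apply/andP; split; lia.
apply: S_ext => x.
rewrite -(S_bij HZ (f := fun y => y - x) (g := fun y => y + x)).
- apply: S_ext => y /=; rewrite mulrA; congr (_ * _ * c _); lia.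
- by move=> y; rewrite subrK.
- by move=> y; rewrite addrK.
apply: (finZ_box (a := d - x - Nc) (b := Nb)) => y.
case: (ltrP Nb y) => [/hb ->|h2]; first by rewrite mul0r mulr0 eqxx.
case: (ltrP Nc (d - x - y)) => [/hc ->|h3]; first by rewrite !mulr0 eqxx.
by move=> _; apply/andP; split; lia.
Qed.

Lemma lmul_sumr (J : Type) (r : seq J) (f : lser) (F : J -> lser) Nf n :
  dle f Nf -> (forall j, exists N, dle (F j) N) ->
  lmul f (fun e => \sum_(j <- r) F j e) n = \sum_(j <- r) lmul f (F j) n.
Proof.
move=> hf hF; rewrite /lmul -(S_sum HZ); last first.
  by move=> j; case: (hF j) => N hN; exact: lmul_fin hf hN.
by apply: S_ext => x; rewrite mulr_sumr.
Qed.

Lemma lmul_scaler (f g : lser) c Nf Ng n : dle f Nf -> dle g Ng ->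
  lmul f (fun e => c * g e) n = c * lmul f g n.
Proof.
move=> hf hg; rewrite /lmul -(S_scale HZ); last exact: lmul_fin hf hg.
by apply: S_ext => x; rewrite mulrCA.
Qed.

Lemma lmul_addr (f g h : lser) Nf Ng Nh n : dle f Nf -> dle g Ng -> dle h Nh ->
  lmul f (fun e => g e + h e) n = lmul f g n + lmul f h n.
Proof.
move=> hf hg hh; rewrite /lmul -(S_add HZ); [|exact: lmul_fin hf hg|exact: lmul_fin hf hh].
by apply: S_ext => x; rewrite mulrDr.
Qed.

Lemma dle_lderiv (f : lser) N : dle f N -> dle (lderiv f) (N - 1).
Proof. by move=> h n hn; rewrite /lderiv h ?mulr0 //; lia. Qed.

Lemma leibniz1 (g h : lser) Ng Nh e : dle g Ng -> dle h Nh ->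
  lderiv (lmul g h) e = lmul (lderiv g) h e + lmul g (lderiv h) e.
Proof.
move=> hg hh.
have hg' := dle_lderiv hg; have hh' := dle_lderiv hh.
rewrite [lmul (lderiv g) h e]/lmul.
rewrite -(S_bij HZ (f := fun x => x - 1) (g := fun x => x + 1)); last exact: lmul_fin hg' hh.
2: by move=> x; rewrite subrK.
2: by move=> x; rewrite addrK.
rewrite /lmul -(S_add HZ); last exact: lmul_fin hg hh'.
- rewrite {1}/lderiv -(S_scale HZ); last exact: lmul_fin hg hh.
  apply: S_ext => x /=; rewrite /lderiv.
  have -> : x - 1 + 1 = x by lia.
  have -> : e - (x - 1) = e + 1 - x by lia.
  have -> : e - x + 1 = e + 1 - x by lia.
  have -> : (e + 1)%:~R = x%:~R + (e + 1 - x)%:~R :> C.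
    by rewrite -intrD; congr (_%:~R); lia.
  ring.
- apply: (finZ_box (a := e + 1 - Nh) (b := Ng + 1)) => x.
  case: (ltrP (Ng + 1) x) => [h1|h1].
    by rewrite (hg' (x - 1)) ?mul0r ?eqxx //; lia.
  case: (ltrP Nh (e - (x - 1))) => [/hh ->|h2]; first by rewrite mulr0 eqxx.
  by move=> _; apply/andP; split; lia.
Qed.

Lemma lderivnS m (f : lser) : lderivn m.+1 f = lderiv (lderivn m f).
Proof. by rewrite /lderivn iterS. Qed.

Lemma leibniz (g h : lser) Ng Nh m e : dle g Ng -> dle h Nh ->
  lderivn m (lmul g h) e =
  \sum_(0 <= j < m.+1) 'C(m, j)%:R * lmul (lderivn j g) (lderivn (m - j)%N h) e.
Proof.
move=> hg hh; elim: m e => [|m ih] e; first by rewrite big_nat1 bin0 mul1r.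
set P := fun j k => lmul (lderivn j g) (lderivn k h) e.
transitivity (\sum_(0 <= j < m.+1) 'C(m, j)%:R * (P j.+1 (m - j)%N + P j (m.+1 - j)%N)).
  rewrite lderivnS {1}/lderiv ih mulr_sumr; apply: eq_big_nat => j /andP[_ hj].
  rewrite mulrCA; congr (_ * _).
  rewrite -/(lderiv (lmul (lderivn j g) (lderivn (m - j)%N h)) e).
  rewrite (leibniz1 _ (dle_lderivn (m:=j) hg) (dle_lderivn (m:=(m - j)%N) hh)) /P -!lderivnS.
  by rewrite subSn.
under eq_bigr do rewrite mulrDr.
rewrite big_split /=.
rewrite [in RHS]big_nat_recl // bin0 mul1r subn0.
under [in RHS]eq_bigr do rewrite binS natrD mulrDl subSS.
rewrite [in RHS]big_split /= addrA [in RHS]addrC.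
congr (_ + _).
rewrite [in LHS]big_nat_recl // bin0 mul1r subn0.
rewrite [in RHS]big_nat_recr //= bin_small // mul0r addr0.
by congr (_ + _); apply: eq_bigr => j _; rewrite subSS.
Qed.
End LmulAlg.


Section Comb.
Variable C : numFieldType.
Local Notation HZ := (@fsumZ_supp C).
Local Notation HN := (@fsumN_supp C).

Lemma fsumN_neq0 (u : nat -> C) : fsumN u != 0 -> exists m, u m != 0.
Proof.
move=> h; apply: NNPP => hn; move/eqP: h; apply; apply: (S0 HN) => m.
by apply/eqP; apply: NNPP => hm; apply: hn; exists m; apply/negP.
Qed.

Lemma fsumZ_neq0 (u : int -> C) : fsumZ u != 0 -> exists m, u m != 0.
Proof.
move=> h; apply: NNPP => hn; move/eqP: h; apply; apply: (S0 HZ) => m.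
by apply/eqP; apply: NNPP => hm; apply: hn; exists m; apply/negP.
Qed.

Lemma sum_neq0 (I : Type) (r : seq I) (F : I -> C) :
  \sum_(i <- r) F i != 0 -> exists i, F i != 0.
Proof.
move=> h; apply: NNPP => hn; move/eqP: h; apply; apply: big1 => i _.
by apply/eqP; apply: NNPP => hm; apply: hn; exists i; apply/negP.
Qed.

Lemma fin_bound (u : nat -> C) : fin u -> exists K, forall m, u m != 0 -> (m < K)%N.
Proof.
move=> [s hs]; exists (\max_(x <- s) x).+1 => m /hs ms; rewrite ltnS.
exact: (leq_bigmax_seq _ ms).
Qed.

Lemma fsumN_if (F : nat -> C) k :
  \sum_(0 <= l < k.+1) F l = fsumN (fun l => if (l <= k)%N then F l else 0).
Proof.
rewrite (fsumN_ord (K := k.+1)); last by move=> m; case: ifP => //; rewrite eqxx.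
rewrite -(big_mkord xpredT (fun l => if (l <= k)%N then F l else 0)); apply: eq_big_nat => l /andP[_ hl].
by rewrite -ltnS hl.
Qed.

Lemma fsumN_shift (X : nat -> C) j : fin X ->
  fsumN (fun m => if (j <= m)%N then X m else 0) = fsumN (fun p => X (p + j)%N).
Proof.
move=> /fin_bound [K hK].
rewrite (fsumN_ord (K := K + j)); last first.
  by move=> m; case: ifP => _; [move/hK => h; lia|rewrite eqxx].
rewrite (fsumN_ord (K := K)); last by move=> m /hK h; lia.
rewrite -(big_mkord xpredT (fun m => if (j <= m)%N then X m else 0)) -(big_mkord xpredT (fun p => X (p + j)%N)) (big_cat_nat _ (n := j)) //=; last by lia.
rewrite big1_seq ?add0r; last first.
  by move=> m; rewrite mem_index_iota => hm; case: ifP => // h; lia.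
rewrite -{1}(add0n j) big_addn addnK; apply: eq_big_nat => p _.
by rewrite leq_addl.
Qed.

Lemma eq_fsumN (u v : nat -> C) : (forall m, u m = v m) -> fsumN u = fsumN v.
Proof. exact: S_ext. Qed.
Lemma eq_fsumZ (u v : int -> C) : (forall m, u m = v m) -> fsumZ u = fsumZ v.
Proof. exact: S_ext. Qed.

Lemma neq0_mulr (a b : C) : a * b != 0 -> b != 0.
Proof. by apply: contraNneq => ->; rewrite mulr0. Qed.

Lemma if_neq0 (b : bool) (x : C) : (if b then x else 0) != 0 -> b /\ x != 0.
Proof. by case: b => //; rewrite eqxx. Qed.

Lemma reindexN (Phi : nat -> nat -> nat -> nat -> C) K :
  (forall m l j k, Phi m l j k != 0 -> (j < K)%N /\ (k < K)%N) ->
  fsumN (fun k => \sum_(0 <= l < k.+1)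
     fsumN (fun i => 'C(k - l + i, i)%:R * Phi (k - l + i)%N l i k))
  = fsumN (fun m => fsumN (fun l =>
     \sum_(0 <= j < m.+1) 'C(m, j)%:R * Phi m l j (l + (m - j))%N)).
Proof.
move=> hP.
under eq_fsumN => k do rewrite fsumN_if.
under [RHS]eq_fsumN => m do under eq_fsumN => l do rewrite fsumN_if.
rewrite (S_fubini HN HN (s1 := iota 0 K) (s2 := iota 0 K)); last first.
  move=> k l /if_neq0 [hlk /fsumN_neq0 [i /neq0_mulr /hP [_ hk]]].
  by rewrite !mem_iota; lia.
have finX : forall l, fin (fun k => fsumN (fun i => 'C(k - l + i, i)%:R * Phi (k - l + i)%N l i k)).
  by move=> l; apply: (finN_box (K := K)) => k /fsumN_neq0 [i /neq0_mulr /hP [_ hk]].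
under eq_fsumN => l do rewrite (fsumN_shift _ (finX l)).
rewrite [RHS](S_fubini HN HN (s1 := iota 0 (K + K)) (s2 := iota 0 K)); last first.
  move=> m l /fsumN_neq0 [j /if_neq0 [hjm /neq0_mulr /hP [hj hk]]].
  by rewrite !mem_iota; lia.
apply: S_ext => l.
rewrite [RHS](S_fubini HN HN (s1 := iota 0 (K + K)) (s2 := iota 0 K)); last first.
  move=> m j /if_neq0 [hjm /neq0_mulr /hP [hj hk]].
  by rewrite !mem_iota; lia.
rewrite [LHS](S_fubini HN HN (s1 := iota 0 K) (s2 := iota 0 K)); last first.
  move=> q i /neq0_mulr /hP [hi hk].
  by rewrite !mem_iota; lia.
apply: S_ext => i.
rewrite fsumN_shift; last first.
  apply: (finN_box (K := K + K)) => m /neq0_mulr /hP [hj hk]; lia.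
apply: S_ext => p.
by rewrite !addnK [(l + p)%N]addnC.
Qed.
End Comb.


Section Act.
Variable C : numFieldType.
Local Notation lser := (lser C).
Local Notation op := (op C).
Local Notation HZ := (@fsumZ_supp C).
Local Notation HN := (@fsumN_supp C).

Definition bnd (A : op) (N : int) := forall m, dle (A m) N.

Lemma lmul_eq0 (f g : lser) Nf Ng n : dle f Nf -> dle g Ng -> Nf + Ng < n -> lmul f g n = 0.
Proof. by move=> hf hg hn; exact: (dle_lmul hf hg hn). Qed.

Lemma act_fin (A : op) (f : lser) NA Nf d : bnd A NA -> dle f Nf ->
  fin (fun m => lmul (A m) (lderivn m f) d).
Proof.
move=> hA hf; apply: (finN_box (K := (absz (NA + Nf - d)%R).+1)) => m.
apply: contraR; rewrite -leqNgt => hm; apply/eqP.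
by apply: (lmul_eq0 (hA m) (dle_lderivn (m:=m) hf)); lia.
Qed.

Lemma dle_act (A : op) (f : lser) NA Nf : bnd A NA -> dle f Nf -> dle (act A f) (NA + Nf).
Proof.
move=> hA hf n hn; apply: (S0 HN) => m.
by apply: (lmul_eq0 (hA m) (dle_lderivn (m:=m) hf)); lia.
Qed.

Lemma dle_fsumN (h : nat -> lser) N : (forall l, dle (h l) N) ->
  dle (fun e => fsumN (fun l => h l e)) N.
Proof. by move=> hh n hn; apply: (S0 HN) => l; apply: hh. Qed.

Lemma lmul_fsumNr (a : lser) (h : nat -> lser) Na Nh n : dle a Na ->
  (forall l, dle (h l) (Nh - l%:Z)) ->
  lmul a (fun e => fsumN (fun l => h l e)) n = fsumN (fun l => lmul a (h l) n).
Proof.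
move=> ha hh; rewrite /lmul.
have hfin : forall x, fin (fun l => h l (n - x)).
  move=> x; apply: (finN_box (K := (absz (Nh - (n - x))%R).+1)) => l.
  by apply: contraR; rewrite -leqNgt => hl; apply/eqP; apply: hh; lia.
under eq_fsumZ => x do rewrite -(S_scale HN _ (hfin x)).
rewrite (S_fubini HZ HN (s1 := zbox (n - Nh) Na) (s2 := iota 0 (absz (Nh - n + Na)%R).+1)) //.
move=> x l; case: (ltrP Na x) => [/ha ->|h1]; first by rewrite mul0r eqxx.
case: (ltrP (Nh - l%:Z) (n - x)) => [/hh ->|h2]; first by rewrite mulr0 eqxx.
move=> _; split; first by apply: mem_zbox; lia.
by rewrite mem_iota; lia.
Qed.

Lemma bnd_dcomp (A B : op) NA NB : bnd A NA -> bnd B NB -> bnd (dcomp A B) (NA + NB).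
Proof.
move=> hA hB k n hn; apply: big1 => l _; apply: (S0 HN) => i.
rewrite (lmul_eq0 (hA _) (dle_lderivn (m:=i) (hB l))) ?mulr0 //; lia.
Qed.

Lemma lderivn_add a b (f : lser) : lderivn a (lderivn b f) = lderivn (a + b) f.
Proof. by rewrite /lderivn iterD. Qed.

Lemma deriv_act (B : op) (f : lser) NB Nf m : bnd B NB -> dle f Nf ->
  lderivn m (act B f) = fun e => fsumN (fun l => lderivn m (lmul (B l) (lderivn l f)) e).
Proof.
move=> hB hf; apply: boolp.funext => e; rewrite lderivnE /act -(S_scale HN); last first.
  exact: act_fin hB hf.
by apply: eq_fsumN => l; rewrite lderivnE.
Qed.

Lemma act_dcomp (A B : op) (f : lser) NA NB Nf d : bnd A NA -> bnd B NB -> dle f Nf ->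
  act (dcomp A B) f d = act A (act B f) d.
Proof.
move=> hA hB hf.
set Phi := fun m l j k => lmul (lmul (A m) (lderivn j (B l))) (lderivn k f) d.
transitivity (fsumN (fun k => \sum_(0 <= l < k.+1)
   fsumN (fun i => 'C(k - l + i, i)%:R * Phi (k - l + i)%N l i k))).
  rewrite /act; apply: eq_fsumN => k.
  rewrite (lmulC (bnd_dcomp hA hB k) (dle_lderivn (m:=k) hf)) /dcomp.
  rewrite (lmul_sumr _ _ (dle_lderivn (m:=k) hf)); last first.
    move=> l; exists (NA + NB); apply: dle_fsumN => i n hn.
    rewrite (lmul_eq0 (hA _) (dle_lderivn (m:=i) (hB l))) ?mulr0 //; lia.
  rewrite -(big_mkord xpredT (fun l => lmul (lderivn k f) (fun e => fsumN (fun i =>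
     'C(k - l + i, i)%:R * lmul (A (k - l + i)%N) (lderivn i (B l)) e)) d)).
  apply: eq_big_nat => l _.
  rewrite (lmul_fsumNr (Nh := NA + NB) _ (dle_lderivn (m:=k) hf)); last first.
    move=> i n hn; rewrite (lmul_eq0 (hA _) (dle_lderivn (m:=i) (hB l))) ?mulr0 //; lia.
  apply: eq_fsumN => i.
  rewrite (lmul_scaler _ _ (dle_lderivn (m:=k) hf) (dle_lmul (hA _) (dle_lderivn (m:=i) (hB l)))).
  by rewrite (lmulC (dle_lderivn (m:=k) hf) (dle_lmul (hA _) (dle_lderivn (m:=i) (hB l)))).
transitivity (fsumN (fun m => fsumN (fun l =>
   \sum_(0 <= j < m.+1) 'C(m, j)%:R * Phi m l j (l + (m - j))%N))); last first.
  rewrite /act; apply: eq_fsumN => m.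
  rewrite (deriv_act m hB hf).
  rewrite (lmul_fsumNr (Nh := NB + Nf) _ (hA m)); last first.
    move=> l n hn; rewrite (dle_lderivn (dle_lmul (hB l) (dle_lderivn (m:=l) hf))) //; lia.
  apply: eq_fsumN => l.
  have -> : lderivn m (lmul (B l) (lderivn l f)) = fun e => \sum_(0 <= j < m.+1)
      'C(m, j)%:R * lmul (lderivn j (B l)) (lderivn (m - j)%N (lderivn l f)) e.
    by apply: boolp.funext => e; apply: leibniz (hB l) (dle_lderivn (m:=l) hf).
  rewrite (lmul_sumr _ _ (hA m)); last first.
    move=> j; exists (NB + Nf) => n hn.
    rewrite (lmul_eq0 (dle_lderivn (m:=j) (hB l)) (dle_lderivn (m:=(m-j)%N) (dle_lderivn (m:=l) hf))) ?mulr0 //; lia.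
  apply: eq_bigr => j _.
  rewrite (lmul_scaler _ _ (hA m) (dle_lmul (dle_lderivn (m:=j) (hB l)) (dle_lderivn (m:=(m-j)%N) (dle_lderivn (m:=l) hf)))).
  rewrite (lmulA (hA m) (dle_lderivn (m:=j) (hB l)) (dle_lderivn (m:=(m-j)%N) (dle_lderivn (m:=l) hf))).
  by rewrite lderivn_add addnC.
apply: (reindexN (K := (absz (NA + NB + Nf - d)%R).+1)) => m l j k.
move=> hne; set K := (absz (NA + NB + Nf - d)%R).+1.
suff : ~~ ((K <= j) || (K <= k))%N by rewrite negb_or -!ltnNge => /andP.
apply: contra hne => hjk; apply/eqP.
apply: (lmul_eq0 (dle_lmul (hA m) (dle_lderivn (m:=j) (hB l))) (dle_lderivn (m:=k) hf)).
case/orP: hjk => h; lia.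
Qed.
End Act.


Section Ops.
Variable C : numFieldType.
Local Notation lser := (lser C).
Local Notation op := (op C).
Local Notation HZ := (@fsumZ_supp C).
Local Notation HN := (@fsumN_supp C).

Lemma lderivn_lone i : (0 < i)%N -> lderivn i (lone C) = (fun _ => 0).
Proof.
case: i => // i _; rewrite -addn1 -lderivn_add.
have -> : lderivn 1 (lone C) = (fun _ => 0) by exact: lderiv_lone.
by rewrite lderivn0.
Qed.

Lemma lmul0f (g : lser) d : lmul (fun _ => 0) g d = 0.
Proof. by rewrite lmul0r. Qed.
Lemma lmulf0 (g : lser) d : lmul g (fun _ => 0) d = 0.
Proof. by rewrite lmulr0. Qed.

Lemma dcomp_op1l (Y : op) : dcomp (op1 C) Y = Y.
Proof.
apply: boolp.funext => k; apply: boolp.funext => d.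
rewrite /dcomp big_ord_recr /= big1 ?add0r.
  rewrite subnn (S_single HN (a := 0%N)) /op1 /=; first by rewrite lmul_lonel mul1r.
  by move=> i /negbTE i0; rewrite add0n i0 lmul0f mulr0.
move=> l _; apply: (S0 HN) => i /=.
rewrite /op1. have -> : (k - l + i == 0)%N = false by have := ltn_ord l; lia.
by rewrite lmul0f mulr0.
Qed.

Lemma dcomp_op1r (Y : op) : dcomp Y (op1 C) = Y.
Proof.
apply: boolp.funext => k; apply: boolp.funext => d.
rewrite /dcomp big_ord_recl /= big1 ?addr0.
  rewrite subn0 (S_single HN (a := 0%N)) /op1 /=; first by rewrite addn0 bin0 mul1r lmul_loner.
  by move=> i i0; rewrite lderivn_lone ?lmulf0 ?mulr0 // lt0n.
by move=> l _; apply: (S0 HN) => i /=; rewrite lderivn0 lmulf0 mulr0.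
Qed.

Lemma lderiv_lz : lderiv (lz C) = lone C.
Proof.
apply: boolp.funext => n; rewrite /lderiv /lz /lone.
case: (eqVneq n 0) => [->|hn]; first by rewrite add0r eqxx mulr1.
have -> : (n + 1 == 1) = false by apply/eqP => h; move/eqP: hn; apply; lia.
by rewrite mulr0.
Qed.

Lemma dcomp_opz (B : op) k d :
  dcomp B (opz C) k d = B k (d - 1) + (k.+1)%:R * B k.+1 d.
Proof.
rewrite /dcomp big_ord_recl /= big1 ?addr0; last first.
  by move=> l _; apply: (S0 HN) => i /=; rewrite lderivn0 lmulf0 mulr0.
rewrite subn0 (fsumN_ord (K := 2)); last first.
  move=> i; apply: contraR; rewrite -leqNgt => hi; apply/eqP.
  case: i hi => [|[|i]] // _; rewrite -addn2 -lderivn_add.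
  have -> : lderivn 2 (lz C) = (fun _ => 0).
    by rewrite /lderivn /= lderiv_lz lderiv_lone.
  by rewrite lderivn0 lmulf0 mulr0.
rewrite big_ord_recr big_ord_recr big_ord0 /= add0r addn0 bin0 mul1r lmul_lzr.
by rewrite /lderivn /= lderiv_lz lmul_loner addn1 bin1.
Qed.

Lemma act_op1 (f : lser) : act (op1 C) f = f.
Proof.
apply: boolp.funext => d; rewrite /act (S_single HN (a := 0%N)) /op1 /=.
  by rewrite lmul_lonel.
by move=> m /negbTE ->; rewrite lmul0f.
Qed.

Definition zn (n : nat) : lser := fun k => if k == n%:Z then 1 else 0.

Lemma dle_zn n : dle (zn n) n%:Z.
Proof. by move=> k hk; rewrite /zn; case: eqP => // h; lia. Qed.

Lemma ffz_zero n m : (n < m)%N -> ffz C (n%:Z - m%:Z) m = 0.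
Proof.
move=> hnm; have hj : (m - n - 1 < m)%N by lia.
rewrite /ffz (bigD1 (Ordinal hj)) //=.
have -> : (n%:Z - m%:Z + (m - n - 1)%N%:Z + 1) = 0 by lia.
by rewrite mul0r.
Qed.

Lemma ffz0_neq0 n : ffz C 0 n != 0.
Proof.
rewrite /ffz; elim: n => [|n ih]; first by rewrite big_ord0 oner_neq0.
rewrite big_ord_recr mulf_neq0 //= intr_eq0; lia.
Qed.

Lemma act_zn (A : op) n d :
  act A (zn n) d = \sum_(m < n.+1) A m (d - (n%:Z - m%:Z)) * ffz C (n%:Z - m%:Z) m.
Proof.
have E : forall m, lmul (A m) (lderivn m (zn n)) d = A m (d - (n%:Z - m%:Z)) * ffz C (n%:Z - m%:Z) m.
  move=> m; rewrite /lmul (S_single HZ (a := d - (n%:Z - m%:Z))).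
    rewrite lderivnE /zn; have -> : d - (d - (n%:Z - m%:Z)) = n%:Z - m%:Z by lia.
    have -> : n%:Z - m%:Z + m%:Z = n%:Z by lia.
    by rewrite eqxx mulr1.
  move=> x hx; rewrite lderivnE /zn; case: eqP => [h|]; last by rewrite !mulr0.
  move: hx; have -> : x = d - (n%:Z - m%:Z) by lia.
  by rewrite eqxx.
rewrite /act (fsumN_ord (K := n.+1)); first by apply: eq_bigr => m _; rewrite E.
move=> m; rewrite E; apply: contraR; rewrite -leqNgt => hm.
by rewrite ffz_zero ?mulr0 //.
Qed.

Lemma faithful (A A' : op) : (forall n d, act A (zn n) d = act A' (zn n) d) -> A = A'.
Proof.
move=> H; apply: boolp.funext; elim/ltn_ind => n IH; apply: boolp.funext => d.
have := H n d; rewrite !act_zn !big_ord_recr /=.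
have -> : \sum_(i < n) A (widen_ord (leqnSn n) i) (d - (n%:Z - i%:Z)) * ffz C (n%:Z - i%:Z) i
  = \sum_(i < n) A' (widen_ord (leqnSn n) i) (d - (n%:Z - i%:Z)) * ffz C (n%:Z - i%:Z) i.
  by apply: eq_bigr => i _; rewrite IH //=.
move/addrI; rewrite subrr subr0; move/mulIf; apply; exact: ffz0_neq0.
Qed.
End Ops.


Section Lin.
Variable C : numFieldType.
Local Notation lser := (lser C).
Local Notation op := (op C).
Local Notation HZ := (@fsumZ_supp C).
Local Notation HN := (@fsumN_supp C).

Lemma dle_lin (f g : lser) c Nf Ng N : dle f Nf -> dle g Ng -> Nf <= N -> Ng <= N ->
  dle (fun e => f e + c * g e) N.
Proof. by move=> hf hg h1 h2 n hn; rewrite hf ?hg ?mulr0 ?addr0 //; lia. Qed.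

Lemma dle_scale (g : lser) c N : dle g N -> dle (fun e => c * g e) N.
Proof. by move=> hg n hn; rewrite hg ?mulr0. Qed.

Lemma act_lin (A : op) (f g : lser) c NA Nf Ng d : bnd A NA -> dle f Nf -> dle g Ng ->
  act A (fun e => f e + c * g e) d = act A f d + c * act A g d.
Proof.
move=> hA hf hg; rewrite /act.
have E : forall m, lderivn m (fun e => f e + c * g e) =
    (fun e => lderivn m f e + c * lderivn m g e).
  by move=> m; apply: boolp.funext => e; rewrite !lderivnE; ring.
under eq_fsumN => m do rewrite E (lmul_addr _ (hA m) (dle_lderivn (m:=m) hf)
   (dle_scale c (dle_lderivn (m:=m) hg)))
   (lmul_scaler _ _ (hA m) (dle_lderivn (m:=m) hg)).
rewrite (S_add HN); [|exact: (act_fin _ hA hf)|exact: (fin_scale c (act_fin _ hA hg))].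
by rewrite (S_scale HN _ (act_fin _ hA hg)).
Qed.
End Lin.

Section GOps.
Variable C : numFieldType.
Local Notation lser := (lser C).
Local Notation op := (op C).
Local Notation HZ := (@fsumZ_supp C).
Local Notation HN := (@fsumN_supp C).
Variable G : op.
Hypothesis hG : inDminus (opsub G (op1 C)).

Lemma G_nonneg m a : 0 <= a -> G m a = op1 C m a.
Proof. by move=> ha; have := hG m ha; rewrite /opsub => /eqP; rewrite subr_eq0 => /eqP. Qed.

Lemma G_pos m a : 0 < a -> G m a = 0.
Proof.
move=> ha; rewrite G_nonneg ?ltW // /op1; case: eqP => // _.
by rewrite /lone; case: eqP => // h; move: ha; rewrite h.
Qed.

Lemma G_m0 m a : m <> 0%N -> 0 <= a -> G m a = 0.
Proof. by move=> hm ha; rewrite G_nonneg // /op1; case: eqP. Qed.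

Lemma G00 : G 0%N 0 = 1.
Proof. by rewrite G_nonneg. Qed.

Lemma bndG : bnd G 0.
Proof. by move=> m n hn; apply: G_pos. Qed.

Lemma actG_top (f : lser) M : dle f M -> act G f M = f M.
Proof.
move=> hf; rewrite /act (S_single HN (a := 0%N)).
  rewrite /lmul /lderivn /= (S_single HZ (a := 0)); first by rewrite G00 mul1r subr0.
  move=> x hx; case: (ltrP 0 x) => [/G_pos ->|hx0]; first by rewrite mul0r.
  have hx1 : x < 0 by rewrite lt_neqAle hx hx0. by rewrite hf ?mulr0 //; lia.
move=> m hm; rewrite /lmul; apply: (S0 HZ) => a.
case: (ltrP a 0) => ha; last by rewrite G_m0 ?mul0r //; move/eqP: hm.
by rewrite lderivnE hf ?mulr0 //; lia.
Qed.

Lemma actG_local (f g : lser) n : (forall q, n <= q -> f q = g q) -> act G f n = act G g n.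
Proof.
move=> h; rewrite /act; apply: eq_fsumN => m; rewrite /lmul; apply: eq_fsumZ => a.
case: (ltrP 0 a) => ha; first by rewrite G_pos ?mul0r.
by rewrite !lderivnE h //; lia.
Qed.

Lemma actG_inj (f g : lser) Nf Ng : dle f Nf -> dle g Ng -> act G f = act G g -> f = g.
Proof.
move=> hf hg hfg; set N := (`|Nf|%:Z + `|Ng|%:Z).
set D := fun e => f e + (-1) * g e.
have hD : dle D N by apply: (dle_lin _ hf hg); lia.
have aD : forall n, act G D n = 0.
  by move=> n; rewrite (act_lin _ _ bndG hf hg) hfg mulN1r subrr.
have H : forall j : nat, dle D (N - j%:Z).
  elim=> [|j ih]; first by move=> n hn; apply: hD; lia.
  move=> n hn; case: (eqVneq n (N - j%:Z)) => [->|hne]; last by apply: ih; lia.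
  by rewrite -(actG_top ih) aD.
apply: boolp.funext => n; apply/eqP; rewrite -subr_eq0 -mulN1r.
apply/eqP; have := H (absz (N - n)).+1 n; rewrite /D => -> //; lia.
Qed.

Definition del (p : int) : lser := fun n => if n == p then 1 else 0.
Lemma dle_del p : dle (del p) p.
Proof. by move=> n hn; rewrite /del; case: eqP => // h; move: hn; rewrite h ltxx. Qed.

Fixpoint approx (h : lser) (M : int) (j : nat) : lser :=
  match j with
  | 0%N => fun _ => 0
  | j'.+1 => let Y := approx h M j' in
      fun n => Y n + (h (M - j'%:Z) - act G Y (M - j'%:Z)) * del (M - j'%:Z) n
  end.

Lemma approx_inv (h : lser) M j : dle h M ->
  dle (approx h M j) M /\ (forall n, M - j%:Z < n -> act G (approx h M j) n = h n).
Proof.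
move=> hh; elim: j => [|j [ih1 ih2]].
  split; first by move=> n _.
  move=> n hn; rewrite hh; last by lia.
  by rewrite /act; apply: (S0 HN) => m; rewrite lderivn0 lmulf0.
set p := M - j%:Z.
have hp : dle (del p) M by move=> n hn; rewrite /del; case: eqP => // hn2; lia.
split.
  by move=> n hn /=; rewrite ih1 // (hp n hn) mulr0 addr0.
move=> n hn /=; rewrite (act_lin _ _ bndG ih1 (dle_del (p:=p))).
case: (eqVneq n p) => [->|hne].
  by rewrite (actG_top (dle_del (p:=p))) /del eqxx mulr1 addrC subrK.
have hnp : p < n by lia.
by rewrite (dle_act bndG (dle_del (p:=p))) ?mulr0 ?addr0 ?ih2 //; lia.
Qed.

Lemma approx_stable (h : lser) M j n : M - j%:Z < n -> approx h M j.+1 n = approx h M j n.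
Proof.
move=> hn /=; rewrite /del; case: eqP => [e|_]; last by rewrite mulr0 addr0.
by move: hn; rewrite e ltxx.
Qed.

Lemma approx_eq (h : lser) M a b n : M - a%:Z < n -> M - b%:Z < n ->
  approx h M a n = approx h M b n.
Proof.
wlog hab : a b / (a <= b)%N.
  by move=> W ha hb; case: (leqP a b) => [/W|/ltnW /W]; [apply|move=> W'; rewrite W'].
move=> ha _; rewrite -(subnKC hab); elim: (b - a)%N => [|k ih]; first by rewrite addn0.
rewrite addnS approx_stable -?ih //; lia.
Qed.

Lemma actG_surj (h : lser) M : dle h M -> exists Y, dle Y M /\ act G Y = h.
Proof.
move=> hh; exists (fun n => approx h M (absz (M - n)).+1 n); split.
  by move=> n hn; case: (approx_inv (absz (M - n)).+1 hh) => H _; apply: H.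
apply: boolp.funext => n.
rewrite (actG_local (g := approx h M (absz (M - n)).+1)).
  by case: (approx_inv (absz (M - n)).+1 hh) => _ H; apply: H; lia.
by move=> q hq; apply: approx_eq; lia.
Qed.
End GOps.


Section Inv.
Variable C : numFieldType.
Local Notation lser := (lser C).
Local Notation op := (op C).
Local Notation HZ := (@fsumZ_supp C).
Local Notation HN := (@fsumN_supp C).
Variable G : op.
Hypothesis hG : inDminus (opsub G (op1 C)).

Let bG := bndG hG.

Definition ginv (h : lser) : lser :=
  epsilon (inhabits (fun _ : int => 0 : C)) (fun Y => (exists N, dle Y N) /\ act G Y = h).

Lemma ginv_spec (h : lser) M : dle h M -> dle (ginv h) M /\ act G (ginv h) = h.
Proof.
move=> hh; have [Y [hY aY]] := actG_surj hG hh.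
have E : exists Y, (exists N, dle Y N) /\ act G Y = h by exists Y; split => //; exists M.
have [[N hN] a] := epsilon_spec (inhabits (fun _ : int => 0 : C)) _ E.
rewrite -/(ginv h) in hN a *.
have -> : ginv h = Y by apply: (actG_inj hG hN hY); rewrite a aY.
by [].
Qed.

Definition Tm (Y : op) (k l : nat) (d : int) : C :=
  fsumN (fun i => 'C(k - l + i, i)%:R * lmul (G (k - l + i)%N) (lderivn i (Y l)) d).

Lemma dcomp_last (Y : op) k d :
  dcomp G Y k d = \sum_(l < k) Tm Y k l d + act G (Y k) d.
Proof.
rewrite /dcomp big_ord_recr /=; congr (_ + _).
rewrite subnn /act; apply: eq_fsumN => i; by rewrite add0n binn mul1r.
Qed.

Definition hrhs (k : nat) (F : nat -> lser) : lser :=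
  fun d => - \sum_(l < k) fsumN (fun i => 'C(k - l + i, i)%:R * lmul (G (k - l + i)%N) (lderivn i (F l)) d).

Fixpoint Xs (k : nat) : nat -> lser :=
  match k with
  | 0%N => fun _ => ginv (lone C)
  | k'.+1 => let F := Xs k' in fun l => if (l <= k')%N then F l else ginv (hrhs k'.+1 F)
  end.

Definition Xop : op := fun l => Xs l l.

Lemma Xs_eq k l : (l <= k)%N -> Xs k l = Xop l.
Proof.
elim: k => [|k ih] hl; first by move: hl; rewrite leqn0 => /eqP ->.
rewrite /=; case: leqP => h; first exact: ih.
have -> : l = k.+1 by lia. by rewrite /Xop /= ltnn.
Qed.

Lemma XopS k : Xop k.+1 = ginv (hrhs k.+1 Xop).
Proof.
rewrite {1}/Xop /= ltnn; congr ginv; apply: boolp.funext => d; rewrite /hrhs.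
congr (- _); apply: eq_bigr => l _; apply: eq_fsumN => i.
by rewrite Xs_eq // -ltnS.
Qed.

Lemma Xop0 : Xop 0%N = ginv (lone C).
Proof. by []. Qed.

Lemma dle_lone : dle (lone C) 0.
Proof. by move=> n hn; rewrite /lone; case: eqP => // h; move: hn; rewrite h ltxx. Qed.

Lemma G_lower m : m <> 0%N -> dle (G m) (-1).
Proof. by move=> hm n hn; apply: G_m0 => //; lia. Qed.

Lemma bndX : bnd Xop 0.
Proof.
move=> k; elim/ltn_ind: k => k IH.
case: k IH => [|k] IH; first by rewrite Xop0; case: (ginv_spec dle_lone).
rewrite XopS; apply: (proj1 (ginv_spec (M := 0) _)).
move=> d hd; rewrite /hrhs big1 ?oppr0 // => l _; apply: (S0 HN) => i.
rewrite (lmul_eq0 (G_lower (m := (k.+1 - l + i)%N) _) (dle_lderivn (m:=i) (IH l (ltn_ord l)))) ?mulr0 //.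
  by have := ltn_ord l; lia.
lia.
Qed.

Lemma GX : dcomp G Xop = op1 C.
Proof.
apply: boolp.funext => k; apply: boolp.funext => d; rewrite dcomp_last.
case: k => [|k]; first by rewrite big_ord0 add0r Xop0; case: (ginv_spec dle_lone) => _ ->.
rewrite XopS; case: (ginv_spec (M := 0) (h := hrhs k.+1 Xop) _) => [|_ ->].
  move=> e he; rewrite /hrhs big1 ?oppr0 // => l _; apply: (S0 HN) => i.
  rewrite (lmul_eq0 (G_lower (m := (k.+1 - l + i)%N) _) (dle_lderivn (m:=i) (bndX l))) ?mulr0 //.
    by have := ltn_ord l; lia.
  lia.
by rewrite /hrhs /op1 /= subrr.
Qed.

Lemma Gcancel (U V : op) : inD U -> inD V -> dcomp G U = dcomp G V -> U = V.
Proof.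
move=> hU hV hUV; apply: boolp.funext; elim/ltn_ind => k IH.
have E : forall d, act G (U k) d = act G (V k) d.
  move=> d; have := congr1 (fun Y => Y k d) hUV; rewrite /= !dcomp_last.
  have -> : \sum_(l < k) Tm U k l d = \sum_(l < k) Tm V k l d.
    by apply: eq_bigr => l _; rewrite /Tm IH.
  by move/addrI.
case: (hU k) => NU hNU; case: (hV k) => NV hNV.
by apply: (actG_inj hG hNU hNV); apply: boolp.funext.
Qed.
End Inv.


Section Final.
Variable C : numFieldType.
Local Notation lser := (lser C).
Local Notation op := (op C).
Local Notation HZ := (@fsumZ_supp C).
Local Notation HN := (@fsumN_supp C).

Lemma assoc3 (A B D : op) NA NB ND : bnd A NA -> bnd B NB -> bnd D ND ->
  dcomp A (dcomp B D) = dcomp (dcomp A B) D.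
Proof.
move=> hA hB hD; apply: faithful => n d.
have hz : dle (zn C n) n%:Z by apply: dle_zn.
rewrite (act_dcomp _ hA (bnd_dcomp hB hD) hz).
rewrite (act_dcomp _ (bnd_dcomp hA hB) hD hz).
have -> : act (dcomp B D) (zn C n) = act B (act D (zn C n)).
  by apply: boolp.funext => e; rewrite (act_dcomp _ hB hD hz).
by rewrite (act_dcomp _ hA hB (dle_act hD hz)).
Qed.

Lemma bnd_op1 : bnd (op1 C) 0.
Proof. by move=> m n hn; rewrite /op1; case: eqP => // _; apply: dle_lone. Qed.

Lemma bnd_opz : bnd (opz C) 1.
Proof.
move=> m n hn; rewrite /opz; case: eqP => // _; rewrite /lz.
by case: eqP => // h; move: hn; rewrite h ltxx.
Qed.

Variable G : op.
Hypothesis hG : inDminus (opsub G (op1 C)).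

Lemma XG : dcomp (Xop G) G = op1 C.
Proof.
have bG := bndG hG; have bX := bndX hG.
apply: (Gcancel hG).
- by move=> m; exists (0 + 0); apply: (bnd_dcomp bX bG).
- by move=> m; exists 0; apply: bnd_op1.
by rewrite (assoc3 bG bX bG) (GX hG) dcomp_op1l dcomp_op1r.
Qed.

Lemma opinvE : opinv G = Xop G.
Proof.
have E : exists X, inD X /\ dcomp G X = op1 C /\ dcomp X G = op1 C.
  exists (Xop G); split; first by move=> m; exists 0; apply: bndX.
  by split; [exact: GX|exact: XG].
have [h1 [h2 h3]] := epsilon_spec (inhabits (op1 C)) _ E.
rewrite -/(opinv G) in h1 h2 h3.
apply: (Gcancel hG) => //; first by move=> m; exists 0; apply: bndX.
by rewrite h2 GX.
Qed.

Lemma QG : dcomp (Qop G) G = dcomp G (opz C).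
Proof.
have bG := bndG hG; have bX := bndX hG.
rewrite /Qop opinvE -(assoc3 (bnd_dcomp bG bnd_opz) bX bG) XG.
by rewrite dcomp_op1r.
Qed.
End Final.


Lemma G0_Psi (C : numFieldType) (W : lser C -> Prop) (G : op C) (Psi : lser C) :
  Gr0plus W -> is_sato_op W G -> is_wave_fn W Psi -> G 0%N = Psi.
Proof.
move=> [_ [_ _ _ hinj _]] [hGm hW] [WPsi hPsi].
have aG : act G (lone C) = G 0%N.
  apply: boolp.funext => d; rewrite /act (S_single (@fsumN_supp C) (a := 0%N)).
    by rewrite /lderivn /= lmul_loner.
  by move=> m hm; rewrite lderivn_lone ?lmulf0 // lt0n.
have WG : W (G 0%N).
  rewrite -aG; apply/hW; exists (lone C); split => //; split.
    by exists 0; apply: dle_lone.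
  by move=> n hn; rewrite /lone; case: eqP => // h; move: hn; rewrite h ltxx.
apply: hinj => //; apply: boolp.funext => n; rewrite /proj_plus; case: ifP => // hn.
rewrite (G_nonneg hGm) //; apply/eqP; rewrite eq_sym -subr_eq0; apply/eqP.
exact: hPsi.
Qed.

Lemma main_gen (C : numFieldType) (W : lser C -> Prop) (G : op C) (Psi : lser C) (B : op C) :
  Gr0plus W -> is_sato_op W G -> is_wave_fn W Psi ->
  inD B -> B 0%N = Psi ->
  dcomp (Qop G) B = dcomp B (opz C) ->
  B = G.
Proof.
move=> hGr hS hPsi _ hB0 hQ.
have hGm : inDminus (opsub G (op1 C)) by case: hS.
have G0 := G0_Psi hGr hS hPsi.
apply: boolp.funext; elim/ltn_ind => k IH.
case: k IH => [|k] IH; first by rewrite hB0 G0.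
apply: boolp.funext => d.
have E1 := congr1 (fun Y => Y k d) hQ.
have E2 := congr1 (fun Y => Y k d) (QG hGm).
rewrite /= !dcomp_opz in E1 E2.
have E3 : dcomp (Qop G) B k d = dcomp (Qop G) G k d.
  by rewrite /dcomp; apply: eq_bigr => l _; rewrite IH //; have := ltn_ord l; lia.
rewrite E3 E2 IH // in E1.
move/addrI: E1 => E; apply/esym; apply: (mulfI _ E); by rewrite pnatr_eq0.
Qed.

Unset Implicit Arguments. Set Strict Implicit.

Theorem mainTheorem6 (R : realType) (W : lser R[i] -> Prop) (G : op R[i])
    (Psi : lser R[i]) (B : op R[i]) :
  Gr0plus W -> is_sato_op W G -> is_wave_fn W Psi ->
  inD B -> B 0%N = Psi ->
  dcomp (Qop G) B = dcomp B (opz R[i]) ->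
  B = G.
Proof.
exact: (@main_gen R[i] W G Psi B).
Qed.
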